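(* Let $p$ be an odd prime with $p\equiv 3\pmod 4$. Then for any odd Dirichlet characters $\chi_1,\chi_2$ modulo $p$ with $\chi_1\chi_2\neq\chi_0$, $$\sum_{a=0}^{p-1}\sum_{b=0}^{p-1}\sum_{c=0}^{p-1}\sum_{d=0}^{p-1}\overline{\chi_1}\,\overline{\chi_2}(a^4+b^4-c^4-d^4)\,\chi_1\chi_2(a^2+b^2-c^2-d^2)=0.$$
   Context: $\chi_0$ denotes the principal character modulo $p$. A character $\chi$ is odd if $\chi(-1)=-1$. Dirichlet characters modulo $p$ are extended by $\chi(x)=0$ when $p\mid x$, and $\overline{\chi}$ denotes the complex conjugate character; $\overline{\chi_1}\,\overline{\chi_2}(x)$ means $\overline{\chi_1}(x)\overline{\chi_2}(x)$. *)

(* Defs.v *)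
From mathcomp Require Import all_boot all_order all_algebra all_field.
Set Implicit Arguments. Unset Strict Implicit. Unset Printing Implicit Defensive.
Import GRing.Theory Num.Theory.
Local Open Scope ring_scope.

Definition dirichlet_char (p : nat) (chi : int -> algC) : Prop :=
  [/\ forall x : int, chi (x + (p%:Z)) = chi x,
      forall x y : int, chi (x * y) = chi x * chi y &
      forall x : int, (chi x == 0) = (p%:Z %| x)%Z ].

Definition principal_char (p : nat) : int -> algC :=
  fun x => if (p%:Z %| x)%Z then 0 else 1.

Definition odd_char (chi : int -> algC) : Prop := chi (-1) = -1.

(* Main.v *)
Require Import Defs.
From mathcomp Require Import all_boot all_order all_algebra all_field.
From mathcomp Require cyclic.
From mathcomp Require Import ring zify.
From Stdlib Require Import Classical_Prop FunctionalExtensionality.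
Import GRing.Theory Num.Theory.
Local Open Scope ring_scope.
Lemma PoszX' (n k : nat) : Posz (n ^ k) = (Posz n) ^+ k.
Proof. by rewrite -!natz natrX. Qed.

Section S.
Variables (p : nat) (chi : int -> algC).
Hypothesis Hper : forall x, chi (x + p%:Z) = chi x.
Hypothesis Hmul : forall x y, chi (x * y) = chi x * chi y.
Hypothesis Hz : forall x, (chi x == 0) = (p%:Z %| x)%Z.
Hypothesis Hp : prime p.

Lemma L_cong x y : (p%:Z %| x - y)%Z -> chi x = chi y.
Proof.
have Hn : forall z (m : nat), chi (z + m%:Z * p%:Z) = chi z.
  move=> z; elim=> [|m IH]; first by rewrite mul0r addr0.
  by rewrite -[m.+1]addn1 PoszD mulrDl mul1r addrA Hper.
move=> /dvdzP [q Hq].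
have -> : x = y + q * p by rewrite -Hq addrC subrK.
case: q {Hq} => m; first exact: Hn.
by rewrite NegzE mulNr -(Hn _ m.+1) subrK.
Qed.

Lemma L_chi1 : chi 1 = 1.
Proof.
have h0 : chi 1 != 0.
  by rewrite Hz dvdzE /= dvdn1; have := prime_gt1 Hp; case: p => [|[]].
apply: (mulfI h0); by rewrite mulr1 -Hmul mulr1.
Qed.

Lemma L_chiX x n : chi (x ^+ n) = chi x ^+ n.
Proof.
elim: n => [|n IH]; first by rewrite !expr0 L_chi1.
by rewrite !exprS Hmul IH.
Qed.

Lemma L_natcong (m n : nat) : (m = n %[mod p])%N -> chi m = chi n.
Proof.
move=> H; apply: L_cong; rewrite -eqz_mod_dvd; apply/eqP.
by rewrite !modz_nat H.
Qed.

Lemma L_fermat (k : nat) : ~~ (p %| k)%N -> chi k ^+ p.-1 = 1.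
Proof.
move=> nk; rewrite -L_chiX -PoszX' -L_chi1; apply: L_natcong.
rewrite -(totient_prime Hp); apply: cyclic.Euler_exp_totient.
by rewrite coprime_sym prime_coprime.
Qed.

Lemma L_norm (k : nat) : ~~ (p %| k)%N -> (chi k)^* * chi k = 1.
Proof.
move=> nk; rewrite -normCKC.
have h : `|chi k| ^+ p.-1 = 1 by rewrite -normrX L_fermat // normr1.
have p1 : (0 < p.-1)%N by have := prime_gt1 Hp; case: p => [|[]].
move/eqP: h; rewrite pexpr_eq1 // => /eqP ->; by rewrite expr1n.
Qed.

Hypothesis Hodd : chi (-1) = 1.
Hypothesis H43 : (p %% 4 = 3)%N.

Lemma L_abs x : chi x = chi (`|x|%N).
Proof.
case: x => n //=.
by rewrite NegzE -mulN1r Hmul Hodd mul1r.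
Qed.

Lemma L_sq1 (k : nat) : ~~ (p %| k)%N -> chi k ^+ 2 = 1 -> chi k = 1.
Proof.
move=> nk h2.
set q := (p %/ 4)%N.
have Hpq : p.-1 = ((2 * q + 1) * 2)%N.
  by rewrite [in LHS](divn_eq p 4) H43 /q; lia.
set m := (2 * q + 1)%N.
have hm : chi (k ^ m)%N = 1.
  have hf : ((k ^ m) ^ 2 == 1 %[mod p])%N.
    rewrite -expnM -Hpq -(totient_prime Hp); apply/eqP; apply: cyclic.Euler_exp_totient.
    by rewrite coprime_sym prime_coprime.
  have k0 : (0 < k)%N by move: nk; case: (k) => //; rewrite dvdn0.
  have x0 : (1 <= k ^ m)%N by rewrite expn_gt0 k0.
  have x2 : (1 <= (k ^ m) ^ 2)%N by rewrite expn_gt0 x0.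
  rewrite eqn_mod_dvd // in hf.
  rewrite -{2}(exp1n 2) subn_sqr Euclid_dvdM // in hf.
  case/orP: hf => hd.
    rewrite -(L_chi1) //; apply: L_natcong.
    by apply/eqP; rewrite eqn_mod_dvd.
  rewrite -Hodd; apply: L_cong.
  by rewrite opprK -PoszD.
rewrite PoszX' L_chiX in hm.
by rewrite -hm /m exprD exprM h2 expr1n mul1r expr1.
Qed.

Lemma L_witness : (fun x => chi x) <> principal_char p ->
  exists k : nat, ~~ (p %| k)%N /\ chi k ^+ 2 != 1.
Proof.
move=> hnp; apply: Classical_Prop.NNPP => hne; apply: hnp.
apply: FunctionalExtensionality.functional_extensionality => x.
rewrite /principal_char; case: ifP => hx.
  by apply/eqP; rewrite Hz.
rewrite L_abs; apply: L_sq1.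
  by rewrite dvdzE /= in hx; rewrite hx.
apply/eqP; apply: contra_notT hne => h; exists `|x|%N; split => //.
by rewrite dvdzE /= in hx; rewrite hx.
Qed.

End S.

Lemma reidx (p k : nat) (G : int -> algC) : (0 < p)%N -> coprime p k ->
  (forall x y, (p%:Z %| x - y)%Z -> G x = G y) ->
  \sum_(a < p) G a%:Z = \sum_(a < p) G (k%:Z * a%:Z).
Proof.
move=> p0 cop HG.
pose h : 'I_p -> 'I_p := fun a => Ordinal (ltn_pmod (k * a) p0).
have hinj : injective h.
  have key : forall a b : 'I_p, (a <= b)%N -> h a = h b -> a = b.
    move=> a b ab /(congr1 val) /= /eqP H.
    rewrite eq_sym eqn_mod_dvd ?leq_mul2l ?ab ?orbT // -mulnBr Gauss_dvdr // in H.
    apply/val_inj/eqP; rewrite eqn_leq ab /=.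
    case: (posnP (b - a)) => [/eqP|hp]; first by rewrite subn_eq0.
    by rewrite gtnNdvd // (leq_ltn_trans (leq_subr _ _)) in H.
  move=> a b hab; case: (leqP a b) => ab; first exact: key.
  by apply/esym/key => //; apply: ltnW.
rewrite (reindex_inj hinj); apply: eq_bigr => a _; apply: HG => /=.
rewrite -eqz_mod_dvd; apply/eqP.
by rewrite -PoszM !modz_nat modn_mod.
Qed.

Definition A4 (a b c d : int) := a ^+ 4 + b ^+ 4 - c ^+ 4 - d ^+ 4.
Definition A2 (a b c d : int) := a ^+ 2 + b ^+ 2 - c ^+ 2 - d ^+ 2.

Section M.
Variables (p : nat) (chi : int -> algC).
Hypothesis Hper : forall x, chi (x + p%:Z) = chi x.
Hypothesis Hmul : forall x y, chi (x * y) = chi x * chi y.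
Hypothesis Hz : forall x, (chi x == 0) = (p%:Z %| x)%Z.
Hypothesis Hp : prime p.
Hypothesis Hodd : chi (-1) = 1.
Hypothesis H43 : (p %% 4 = 3)%N.

Definition F (a b c d : int) := (chi (A4 a b c d))^* * chi (A2 a b c d).

Lemma F_cong a b c d a' b' c' d' :
  (p%:Z %| a - a')%Z -> (p%:Z %| b - b')%Z -> (p%:Z %| c - c')%Z -> (p%:Z %| d - d')%Z ->
  F a b c d = F a' b' c' d'.
Proof.
move=> ha hb hc hd; rewrite /F.
congr (_^* * _); apply: (@L_cong p chi Hper).
  have -> : A4 a b c d - A4 a' b' c' d' =
    (a - a') * (a^+3 + a^+2 * a' + a * a'^+2 + a'^+3)
    + (b - b') * (b^+3 + b^+2 * b' + b * b'^+2 + b'^+3)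
    - (c - c') * (c^+3 + c^+2 * c' + c * c'^+2 + c'^+3)
    - (d - d') * (d^+3 + d^+2 * d' + d * d'^+2 + d'^+3) by rewrite /A4; ring.
  by rewrite !rpredB ?rpredD ?dvdz_mulr.
have -> : A2 a b c d - A2 a' b' c' d' =
    (a - a') * (a + a') + (b - b') * (b + b')
    - (c - c') * (c + c') - (d - d') * (d + d') by rewrite /A2; ring.
by rewrite !rpredB ?rpredD ?dvdz_mulr.
Qed.

Lemma F_scale (k : nat) a b c d : ~~ (p %| k)%N ->
  F (k%:Z * a) (k%:Z * b) (k%:Z * c) (k%:Z * d) = (chi k)^* ^+ 2 * F a b c d.
Proof.
move=> nk; rewrite /F.
have -> : A4 (k%:Z * a) (k%:Z * b) (k%:Z * c) (k%:Z * d) = k%:Z ^+ 4 * A4 a b c d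
  by rewrite /A4; ring.
have -> : A2 (k%:Z * a) (k%:Z * b) (k%:Z * c) (k%:Z * d) = k%:Z ^+ 2 * A2 a b c d
  by rewrite /A2; ring.
rewrite !Hmul !rmorphM.
have e := @L_norm p chi Hper Hmul Hz Hp k nk.
transitivity (((chi k)^* * chi k) ^+ 2 * ((chi k)^* ^+ 2 *
  ((chi (A4 a b c d))^* * chi (A2 a b c d)))); first ring.
by rewrite e expr1n mul1r.
Qed.

Lemma L_main : (fun x => chi x) <> principal_char p ->
  \sum_(a < p) \sum_(b < p) \sum_(c < p) \sum_(d < p) F a b c d = 0.
Proof.
move=> hnp.
have [k [nk hk2]] := @L_witness p chi Hper Hmul Hz Hp Hodd H43 hnp.
have cop : coprime p k by rewrite prime_coprime.
have p0 : (0 < p)%N by apply: prime_gt0.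
have d0 : forall x : int, (p%:Z %| x - x)%Z by move=> x; rewrite subrr dvdz0.
set S := LHS.
set u := (chi k)^* ^+ 2.
have HS : S = u * S.
  rewrite {1}/S (@reidx p k (fun x => \sum_(b < p) \sum_(c < p) \sum_(d < p) F x b%:Z c%:Z d%:Z)) //; last first.
    move=> x y hxy; apply: eq_bigr => b _; apply: eq_bigr => c _; apply: eq_bigr => d _.
    exact: F_cong.
  rewrite /S mulr_sumr; apply: eq_bigr => a _.
  rewrite (@reidx p k (fun y => \sum_(c < p) \sum_(d < p) F (k%:Z * a%:Z) y c%:Z d%:Z)) //; last first.
    move=> x y hxy; apply: eq_bigr => c _; apply: eq_bigr => d _.
    exact: F_cong.
  rewrite mulr_sumr; apply: eq_bigr => b _.
  rewrite (@reidx p k (fun y => \sum_(d < p) F (k%:Z * a%:Z) (k%:Z * b%:Z) y d%:Z)) //; last first.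
    move=> x y hxy; apply: eq_bigr => d _.
    exact: F_cong.
  rewrite mulr_sumr; apply: eq_bigr => c _.
  rewrite (@reidx p k (fun y => F (k%:Z * a%:Z) (k%:Z * b%:Z) (k%:Z * c%:Z) y)) //; last first.
    by move=> x y hxy; apply: F_cong.
  rewrite mulr_sumr; apply: eq_bigr => d _.
  exact: F_scale.
have hu : u != 1.
  apply: contra hk2 => /eqP hu1.
  by rewrite -[chi k]conjCK -rmorphXn -/u hu1 rmorph1.
have : (1 - u) * S = 0 by rewrite mulrBl mul1r -HS subrr.
by move/eqP; rewrite mulf_eq0 subr_eq0 eq_sym (negbTE hu) => /eqP.
Qed.

End M.

Theorem lemma2p3 (p : nat) (chi1 chi2 : int -> algC) :
  prime p -> odd p -> (p %% 4 = 3)%N ->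
  dirichlet_char p chi1 -> dirichlet_char p chi2 ->
  odd_char chi1 -> odd_char chi2 ->
  (fun x => chi1 x * chi2 x) <> principal_char p ->
  \sum_(a < p) \sum_(b < p) \sum_(c < p) \sum_(d < p)
     ((chi1 (a%:Z ^+ 4 + b%:Z ^+ 4 - c%:Z ^+ 4 - d%:Z ^+ 4))^* *
      (chi2 (a%:Z ^+ 4 + b%:Z ^+ 4 - c%:Z ^+ 4 - d%:Z ^+ 4))^* *
      (chi1 (a%:Z ^+ 2 + b%:Z ^+ 2 - c%:Z ^+ 2 - d%:Z ^+ 2) *
       chi2 (a%:Z ^+ 2 + b%:Z ^+ 2 - c%:Z ^+ 2 - d%:Z ^+ 2))) = 0.
Proof.
move=> Hp _ H43 [per1 m1 z1] [per2 m2 z2] o1 o2 hnp.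
pose chi := fun x => chi1 x * chi2 x.
have Hper : forall x, chi (x + p%:Z) = chi x by move=> x; rewrite /chi per1 per2.
have Hmul : forall x y, chi (x * y) = chi x * chi y.
  by move=> x y; rewrite /chi m1 m2; ring.
have Hz : forall x, (chi x == 0) = (p%:Z %| x)%Z.
  by move=> x; rewrite /chi mulf_eq0 z1 z2 orbb.
have Hodd : chi (-1) = 1 by rewrite /chi o1 o2 mulrNN mulr1.
rewrite -[RHS](@L_main p chi Hper Hmul Hz Hp Hodd H43 hnp).
apply: eq_bigr => a _; apply: eq_bigr => b _; apply: eq_bigr => c _; apply: eq_bigr => d _.
rewrite /F /chi rmorphM.
reflexivity.
Qed.
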